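(* Let $(V,E_1)$ and $(V,E_2)$ be finite graphs on the same vertex set $V$ and let $0\le\lambda<1$, $0\le\varepsilon<1$ be constants. Denote by $m_i(v)$ the degree of $v$ in $(V,E_i)$. Assume that $(V,E_1\cup E_2)$ is connected and that the second largest eigenvalue of the random walk on it is less than $\lambda$. If for every $v\in V$, $\frac{m_2(v)}{m_1(v)}\le\varepsilon<\frac{1-\lambda}{4}$, then $(V,E_1)$ is connected and the second largest eigenvalue of the random walk on it is less than $\lambda+4\varepsilon$.
   Context: The random walk on a finite graph $(V,E)$ is the operator $(A\phi)(v)=\frac1{m(v)}\sum_{u:\{u,v\}\in E}\phi(u)$, where $m(v)$ is the degree of $v$ (edges counted with multiplicity; in $(V,E_1\cup E_2)$ the degree is $m_1(v)+m_2(v)$); it is self-adjoint with respect to the inner product $\langle\phi,\psi\rangle=\sum_v m(v)\phi(v)\overline{\psi(v)}$, with eigenvalues in $[-1,1]$, the largest being $1$. *)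

(* Defs.v *)
From HB Require Import structures.
From mathcomp Require Import all_boot all_order all_algebra.
From mathcomp Require Import reals.
Set Implicit Arguments. Unset Strict Implicit. Unset Printing Implicit Defensive.
Import Order.TTheory GRing.Theory Num.Theory.
Local Open Scope ring_scope.

(* A finite (multi)graph on the vertex set V is given by its edge
   multiplicity function w : V -> V -> nat (w u v = number of edges {u,v}),
   which must be symmetric.  Loops w v v are counted once, consistently
   with the random-walk formula. *)
Definition sym_graph (V : finType) (w : V -> V -> nat) : Prop :=
  forall u v, w u v = w v u.

Definition gunion (V : finType) (w1 w2 : V -> V -> nat) : V -> V -> nat :=
  fun u v => (w1 u v + w2 u v)%N.

Definition deg (V : finType) (w : V -> V -> nat) (v : V) : nat :=
  (\sum_(u : V) w v u)%N.

Definition gconnected (V : finType) (w : V -> V -> nat) : Prop :=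
  forall u v : V, connect [rel x y | (0 < w x y)%N] u v.

Definition rw_mx (R : fieldType) (V : finType) (w : V -> V -> nat)
  : 'M[R]_#|V| :=
  \matrix_(i, j) ((w (enum_val i) (enum_val j))%:R
                   / (deg w (enum_val i))%:R).

Definition eigen_seq (R : realFieldType) (n : nat) (A : 'M[R]_n) (s : seq R)
  : Prop :=
  sorted (fun x y => y <= x) s /\ char_poly A = \prod_(x <- s) ('X - x%:P).

Definition second_eig_lt (R : realFieldType) (n : nat) (A : 'M[R]_n) (c : R)
  : Prop :=
  exists s, eigen_seq A s /\ ((1 < size s)%N -> s`_1 < c).

(* Main.v *)
Require Import Defs.
From HB Require Import structures.
From mathcomp Require Import all_boot all_order all_algebra.
From mathcomp Require Import reals.
From mathcomp Require Import ring lra.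
From mathcomp.real_closed Require Import complex.
Import Order.TTheory GRing.Theory Num.Theory.
Local Open Scope ring_scope.

Module SpecHelpers.
Set Implicit Arguments. Unset Strict Implicit. Unset Printing Implicit Defensive.
Local Open Scope sesquilinear_scope.

Lemma char_poly_simil (R : comNzRingType) n (M Q Qi : 'M[R]_n) :
  Qi *m Q = 1%:M -> char_poly (Qi *m M *m Q) = char_poly M.
Proof.
move=> QQ.
have E : char_poly_mx (Qi *m M *m Q) =
    map_mx polyC Qi *m char_poly_mx M *m map_mx polyC Q.
  rewrite /char_poly_mx mulmxBr mulmxBl -!map_mxM.
  rewrite scalar_mxC -(mulmxA 'X%:M) -map_mxM QQ map_mx1 mulmx1 //.
by rewrite /char_poly E !det_mulmx mulrAC -det_mulmx -map_mxM QQ map_mx1 det1 mul1r.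
Qed.

Section Spec.
Variable C : numClosedFieldType.
Variable n : nat.

Definition ip (u v : 'rV[C]_n) : C := (u *m v ^t*) 0 0.

Lemma ipE u v : ip u v = \sum_k u 0 k * (v 0 k)^*.
Proof. by rewrite /ip !mxE; apply: eq_bigr => k _; rewrite !mxE. Qed.

Lemma ipM u v (M : 'M[C]_n) : ip (u *m M) v = ip u (v *m M ^t*).
Proof.
rewrite /ip trmx_mul map_mxM trmxCK mulmxA //.
Qed.

Lemma ipDl u v w : ip (u + v) w = ip u w + ip v w.
Proof. by rewrite !ipE -big_split; apply: eq_bigr => k _; rewrite mxE mulrDl. Qed.

Lemma ipZl a u w : ip (a *: u) w = a * ip u w.
Proof. by rewrite !ipE mulr_sumr; apply: eq_bigr => k _; rewrite mxE mulrA. Qed.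

Lemma ipDr u v w : ip u (v + w) = ip u v + ip u w.
Proof. by rewrite !ipE -big_split; apply: eq_bigr => k _; rewrite !mxE rmorphD mulrDr. Qed.

Lemma ipZr a u w : ip u (a *: w) = ip u w * a^*.
Proof. by rewrite !ipE mulr_suml; apply: eq_bigr => k _; rewrite !mxE rmorphM mulrCA mulrC. Qed.

Lemma ip0l w : ip 0 w = 0.
Proof. by rewrite ipE big1 // => k _; rewrite mxE mul0r. Qed.

Lemma row_neq0 (y : 'rV[C]_n) : y != 0 -> exists k, y 0 k != 0.
Proof.
move=> yn0; case: (boolP [exists k, y 0 k != 0]) => [/existsP[k hk]|]; first by exists k.
move=> /existsPn hall; case/eqP: yn0; apply/rowP => k; rewrite mxE.
by move: (hall k); rewrite negbK => /eqP.
Qed.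

Section OneS.
Variable S : 'M[C]_n.
Hypothesis Sh : S \is hermsymmx.
Let P := spectralmx S.
Let e := spectral_diag S.

Lemma PU : P *m P ^t* = 1%:M.
Proof. exact/unitarymxP/spectral_unitarymx. Qed.

Lemma UP : P ^t* *m P = 1%:M.
Proof.
rewrite -invmx_unitary ?spectral_unitarymx // mulVmx //; exact: spectral_unit.
Qed.

Lemma SE : S = P ^t* *m diag_mx e *m P.
Proof.
have := hermitian_normalmx Sh => /orthomx_spectralP ->.
by rewrite invmx_unitary ?spectral_unitarymx.
Qed.

Lemma e_real k : e 0 k \is Num.real.
Proof. by have /mxOverP := hermitian_spectral_diag_real Sh; apply. Qed.

Lemma ipP u v : ip u v = ip (u *m P ^t*) (v *m P ^t*).
Proof. by rewrite ipM trmxCK -mulmxA UP mulmx1. Qed.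

Lemma ipdiag y : ip (y *m diag_mx e) y = \sum_k e 0 k * (y 0 k * (y 0 k)^*).
Proof.
rewrite ipE; apply: eq_bigr => k _; rewrite mul_mx_diag mxE.
by rewrite mulrA [_ * e 0 k]mulrC -mulrA.
Qed.

Lemma spec_a (lam : C) (u0 : 'rV[C]_n) :
  lam < 1 -> u0 != 0 -> u0 *m S = u0 ->
  (#|[pred k : 'I_n | ~~ (e 0 k < lam)%R]| <= 1)%N ->
  forall x, x != 0 -> ip x u0 = 0 -> ip (x *m S) x < lam * ip x x.
Proof.
move=> lam1 u0n0 u0S hcard x xn0 xu0.
set y := x *m P ^t*; set y0 := u0 *m P ^t*.
have y0d : y0 *m diag_mx e = y0.
  rewrite /y0 -{2}u0S SE !mulmxA -[u0 *m _ *m _ *m _ *m _]mulmxA PU mulmx1.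
  by [].
have y0n0 : y0 != 0.
  apply: contraNneq u0n0 => h; rewrite -[u0]mulmx1 -UP mulmxA -/y0 h mul0mx //.
have [k0 hk0] := row_neq0 y0n0.
have y0k k : y0 0 k * e 0 k = y0 0 k.
  by have /rowP/(_ k) := y0d; rewrite mul_mx_diag mxE.
have ek0 : e 0 k0 = 1.
  by apply: (mulfI hk0); rewrite mulr1 y0k.
have k0in : k0 \in [pred k : 'I_n | ~~ (e 0 k < lam)%R].
  by rewrite inE ek0 le_gtF // ltW.
have elt k : k != k0 -> e 0 k < lam.
  move=> kk0; apply: contraNT kk0 => hk.
  have kin : k \in [pred k : 'I_n | ~~ (e 0 k < lam)%R] by rewrite inE.
  by apply/eqP; exact: (card_le1_eqP hcard).
have y00 k : k != k0 -> y0 0 k = 0.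
  move=> kk0; apply/eqP; apply: contraTT (elt k kk0) => hk.
  have ek : e 0 k = 1 by apply: (mulfI hk); rewrite mulr1 y0k.
  by rewrite ek le_gtF // ltW.
have yk0 : y 0 k0 = 0.
  move: xu0; rewrite ipP -/y -/y0 ipE (bigD1 k0) //= big1 ?addr0.
    by move/eqP; rewrite mulf_eq0 conjC_eq0 (negbTE hk0) orbF => /eqP.
  by move=> k kk0; rewrite y00 // conjC0 mulr0.
have yn0 : y != 0.
  apply: contraNneq xn0 => h; rewrite -[x]mulmx1 -UP mulmxA -/y h mul0mx //.
have [k1 hk1] := row_neq0 yn0.
have k10 : k1 != k0 by apply: contraNneq hk1 => ->; rewrite yk0.
have -> : ip (x *m S) x = ip (y *m diag_mx e) y.
  rewrite ipP SE !mulmxA -/y -[y *m _ *m P *m _]mulmxA PU mulmx1 //.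
rewrite ipdiag [ip x x]ipP -/y ipE mulr_sumr.
rewrite (bigD1 k1) //= [X in _ < X](bigD1 k1) //=.
apply: ltr_leD.
  by rewrite ltr_pM2r ?mul_conjC_gt0 // elt.
apply: ler_sum => k _; case: (eqVneq k k0) => [->|kk0].
  by rewrite yk0 mul0r !mulr0.
by apply: ler_wpM2r; [exact: mul_conjC_ge0 | exact/ltW/elt].
Qed.

Lemma spec_b (c : C) k0 k1 (g : 'rV[C]_n) :
  k0 != k1 -> c <= e 0 k0 -> c <= e 0 k1 ->
  exists x, [/\ x != 0, ip x g = 0 & c * ip x x <= ip (x *m S) x].
Proof.
move=> k01 c0 c1.
set p0 := row k0 P; set p1 := row k1 P.
have PS : P *m S = diag_mx e *m P.
  by rewrite {1}SE !mulmxA PU mul1mx.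
have pS k : row k P *m S = e 0 k *: row k P.
  by rewrite -row_mul PS mul_diag_mx; apply/rowP => j; rewrite !mxE.
have pp i j : ip (row i P) (row j P) = (i == j)%:R.
  rewrite ipE; have := congr1 (fun M : 'M[C]_n => M i j) PU.
  rewrite /= !mxE => <-.
  by apply: eq_bigr => k _; rewrite !mxE.
set al := ip p0 g; set be := ip p1 g.
pose a : C := if al == 0 then 1 else be.
pose b : C := if al == 0 then 0 else - al.
have abn0 : 0 < a * a^* + b * b^*.
  rewrite /a /b; case: ifP => h.
    by rewrite conjC1 conjC0 mulr0 addr0 mulr1 ltr01.
  apply: ltr_wpDl; first exact: mul_conjC_ge0.
  by rewrite mul_conjC_gt0 oppr_eq0 h.
exists (a *: p0 + b *: p1); split.
- apply: contraTneq abn0 => h.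
  have : ip (a *: p0 + b *: p1) (a *: p0 + b *: p1) = 0 by rewrite h ip0l.
  rewrite !(ipDl, ipDr, ipZl, ipZr) !pp eqxx (negbTE k01) eq_sym (negbTE k01).
  by rewrite !eqxx /= !mul1r !mul0r !addr0 !add0r => ->; rewrite ltxx.
- rewrite ipDl !ipZl -/al -/be /a /b; case: ifP => [/eqP ->|_].
    by rewrite mulr0 mul0r addr0.
  by rewrite mulrC mulNr addrN.
- rewrite mulmxDl -!scalemxAl !pS.
  rewrite !(ipDl, ipDr, ipZl, ipZr) !pp eqxx (negbTE k01) eq_sym (negbTE k01).
  rewrite !eqxx /= !mulr1 !mulr0 !mul0r !addr0 !add0r mulrDr !(mulrCA a) !(mulrCA b).
  by rewrite !mul1r; apply: lerD; apply: ler_wpM2r => //; exact: mul_conjC_ge0.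
Qed.

Lemma char_spec : char_poly S = \prod_(k < n) ('X - (e 0 k)%:P).
Proof.
rewrite {1}SE char_poly_simil ?UP // char_poly_trig ?diag_mx_is_trig //.
by apply: eq_bigr => k _; rewrite mxE eqxx mulr1n.
Qed.

End OneS.
End Spec.

Local Open Scope sesquilinear_scope.

Section Bridge.
Variable C : numClosedFieldType.
Variable n : nat.

Definition degv (W : 'M[C]_n) i := \sum_j W i j.
Definition sqd (W : 'M[C]_n) i := sqrtC (degv W i).
Definition Sm (W : 'M[C]_n) : 'M[C]_n := \matrix_(i,j) (W i j / (sqd W i * sqd W j)).
Definition Am (W : 'M[C]_n) : 'M[C]_n := \matrix_(i,j) (W i j / degv W i).
Definition Hf (W : 'M[C]_n) (f : 'rV[C]_n) := \sum_i \sum_j W i j * f 0 i * (f 0 j)^*.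
Definition Nf (W : 'M[C]_n) (f : 'rV[C]_n) := \sum_i degv W i * (f 0 i * (f 0 i)^*).
Definition tox (W : 'M[C]_n) (f : 'rV[C]_n) := \row_i (sqd W i * f 0 i).
Definition u0 (W : 'M[C]_n) : 'rV[C]_n := \row_i sqd W i.

Variable W : 'M[C]_n.
Hypothesis Wsym : forall i j, W i j = W j i.
Hypothesis Wge0 : forall i j, 0 <= W i j.
Hypothesis dpos : forall i, 0 < degv W i.

Lemma sq_gt0 i : 0 < sqd W i.
Proof. by rewrite sqrtC_gt0. Qed.
Lemma sq_neq0 i : sqd W i != 0.
Proof. by rewrite gt_eqF ?sq_gt0. Qed.
Lemma sq_conj i : (sqd W i)^* = sqd W i.
Proof. by rewrite conj_Creal // sqrtC_real // ltW. Qed.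
Lemma sq2 i : sqd W i * sqd W i = degv W i.
Proof. by rewrite -expr2 sqrtCK. Qed.
Lemma conj_sqM i x : (sqd W i * x)^* = sqd W i * x^*.
Proof. by rewrite rmorphM; congr (_ * _); exact: sq_conj. Qed.
Lemma W_conj i j : (W i j)^* = W i j.
Proof. by rewrite conj_Creal // ger0_real. Qed.
Lemma degv_sym j : \sum_i W i j = degv W j.
Proof. by apply: eq_bigr => i _; rewrite Wsym. Qed.

Lemma Sm_herm : Sm W \is hermsymmx.
Proof.
apply/is_hermitianmxP; rewrite expr0 scale1r; apply/matrixP => i j.
rewrite !mxE conj_Creal; last first.
  by rewrite rpredM ?rpredV ?ger0_real // mulr_ge0 // ltW // sq_gt0.
by rewrite Wsym [sqd W j * _]mulrC.
Qed.

Lemma char_Am : char_poly (Am W) = char_poly (Sm W).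
Proof.
pose D := diag_mx (u0 W).
pose Di := diag_mx (\row_i (sqd W i)^-1 : 'rV[C]_n).
have DD : Di *m D = 1%:M.
  rewrite mulmx_diag -diag_const_mx; congr diag_mx; apply/rowP => i.
  by rewrite !mxE mulVf ?sq_neq0.
have -> : Am W = Di *m Sm W *m D.
  apply/matrixP => i j; rewrite mul_mx_diag mul_diag_mx !mxE.
  have := sq_neq0 i; have := sq_neq0 j; rewrite -sq2 => h1 h2.
  by field; rewrite h1 h2.
by rewrite char_poly_simil.
Qed.

Lemma bridge_H f : ip (tox W f *m Sm W) (tox W f) = Hf W f.
Proof.
rewrite ipE /Hf exchange_big; apply: eq_bigr => k _.
rewrite !mxE mulr_suml; apply: eq_bigr => i _; rewrite !mxE conj_sqM.
have := sq_neq0 i; have := sq_neq0 k => h1 h2.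
by field; rewrite h1 h2.
Qed.

Lemma bridge_N f : ip (tox W f) (tox W f) = Nf W f.
Proof.
rewrite ipE; apply: eq_bigr => k _; rewrite !mxE conj_sqM -sq2.
by ring.
Qed.

Lemma bridge_u f : ip (tox W f) (u0 W) = \sum_i degv W i * f 0 i.
Proof.
rewrite ipE; apply: eq_bigr => k _; rewrite !mxE sq_conj -sq2.
by ring.
Qed.

Lemma u0S : u0 W *m Sm W = u0 W.
Proof.
apply/rowP => j; rewrite !mxE.
have -> : \sum_i u0 W 0 i * Sm W i j = (\sum_i W i j) / sqd W j.
  rewrite mulr_suml; apply: eq_bigr => i _; rewrite !mxE.
  have := sq_neq0 i; have := sq_neq0 j => h1 h2.
  by field; rewrite h1 h2.
rewrite degv_sym -sq2; have := sq_neq0 j => h; by field.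
Qed.

Lemma u0n0 : (0 < n)%N -> u0 W != 0.
Proof.
move=> n0; apply/eqP => /rowP /(_ (Ordinal n0)); rewrite !mxE => /eqP.
by rewrite (negbTE (sq_neq0 _)).
Qed.

Lemma fromx_inv f : \row_i (tox W f 0 i / sqd W i) = f.
Proof.
apply/rowP => i; rewrite !mxE; have := sq_neq0 i => h; by field.
Qed.

Lemma fromx (x : 'rV[C]_n) : tox W (\row_i (x 0 i / sqd W i)) = x.
Proof.
apply/rowP => i; rewrite !mxE; have := sq_neq0 i => h; by field.
Qed.

Lemma NH_ge0 f : 0 <= Nf W f + Hf W f.
Proof.
have E : \sum_i \sum_j W i j * ((f 0 i + f 0 j) * (f 0 i + f 0 j)^*)
    = 2%:R * (Nf W f + Hf W f).
  have E1 : \sum_i \sum_j W i j * (f 0 j * (f 0 j)^*) = Nf W f.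
    rewrite exchange_big; apply: eq_bigr => j _.
    by rewrite -mulr_suml degv_sym.
  have E2 : \sum_i \sum_j W i j * (f 0 j * (f 0 i)^*) = Hf W f.
    rewrite exchange_big; apply: eq_bigr => j _; apply: eq_bigr => i _.
    by rewrite Wsym mulrA.
  have E3 : \sum_i \sum_j W i j * (f 0 i * (f 0 i)^*) = Nf W f.
    by apply: eq_bigr => i _; rewrite -mulr_suml.
  have E4 : \sum_i \sum_j W i j * (f 0 i * (f 0 j)^*) = Hf W f.
    by apply: eq_bigr => i _; apply: eq_bigr => j _; rewrite mulrA.
  transitivity ((\sum_i \sum_j W i j * (f 0 i * (f 0 i)^*) +
                 \sum_i \sum_j W i j * (f 0 j * (f 0 j)^*)) +
                (\sum_i \sum_j W i j * (f 0 i * (f 0 j)^*) +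
                 \sum_i \sum_j W i j * (f 0 j * (f 0 i)^*))); last first.
    by rewrite E1 E2 E3 E4; ring.
  rewrite -!big_split; apply: eq_bigr => i _; rewrite -!big_split.
  apply: eq_bigr => j _ /=; rewrite rmorphD; ring.
have : 0 <= 2%:R * (Nf W f + Hf W f).
  rewrite -E; apply: sumr_ge0 => i _; apply: sumr_ge0 => j _.
  by apply: mulr_ge0 => //; exact: mul_conjC_ge0.
by rewrite pmulr_rge0 // ltr0n.
Qed.

Lemma N_gt0 f : f != 0 -> 0 < Nf W f.
Proof.
move=> /row_neq0 [k hk]; rewrite /Nf (bigD1 k) //=.
apply: ltr_pwDl; first by apply: mulr_gt0 => //; rewrite mul_conjC_gt0.
apply: sumr_ge0 => i _; apply: mulr_ge0; [exact: ltW | exact: mul_conjC_ge0].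
Qed.

Lemma N_ge0 f : 0 <= Nf W f.
Proof.
apply: sumr_ge0 => i _; apply: mulr_ge0; [exact: ltW | exact: mul_conjC_ge0].
Qed.

Lemma tox0 : tox W 0 = 0.
Proof. by apply/rowP => i; rewrite !mxE mulr0. Qed.

Lemma tox_eq0 f : tox W f = 0 -> f = 0.
Proof.
move=> h; rewrite -[f](fromx_inv) h; apply/rowP => i; rewrite !mxE mul0r //.
Qed.

Lemma rayleigh (lam : C) : lam < 1 ->
  (#|[pred k : 'I_n | ~~ (spectral_diag (Sm W) 0 k < lam)%R]| <= 1)%N ->
  forall f : 'rV[C]_n, f != 0 -> \sum_i degv W i * f 0 i = 0 -> Hf W f < lam * Nf W f.
Proof.
move=> lam1 hc f fn0 hs.
have n0 : (0 < n)%N.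
  by case/row_neq0: fn0 => k _; exact: (leq_ltn_trans (leq0n k) (ltn_ord k)).
rewrite -bridge_H -bridge_N.
apply: (spec_a Sm_herm lam1 (u0n0 n0) u0S hc).
  by apply: contra_neq fn0 => /tox_eq0.
by rewrite bridge_u.
Qed.

Lemma second (g : 'I_n -> C) (c : C) k0 k1 :
  (forall i, g i \is Num.real) -> k0 != k1 ->
  c <= spectral_diag (Sm W) 0 k0 -> c <= spectral_diag (Sm W) 0 k1 ->
  exists f : 'rV[C]_n, [/\ f != 0, \sum_i g i * f 0 i = 0 & c * Nf W f <= Hf W f].
Proof.
move=> greal k01 c0 c1.
have [x [xn0 xg hx]] := spec_b Sm_herm (\row_i (g i / sqd W i)) k01 c0 c1.
exists (\row_i (x 0 i / sqd W i)); split.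
- by apply: contra_neq xn0 => h; rewrite -(fromx x) h tox0.
- transitivity (ip x (\row_i (g i / sqd W i))); last exact: xg.
  rewrite ipE; apply: eq_bigr => i _; rewrite !mxE.
  rewrite conj_Creal; last by rewrite rpredM ?rpredV ?greal // sqrtC_real // ltW.
  by ring.
- by rewrite -bridge_H -bridge_N fromx.
Qed.

End Bridge.

End SpecHelpers.
Import SpecHelpers.

Section F.
Variable R : realType.
Local Notation C := R[i].
Local Notation rc := (real_complex R).
Lemma comb (lam eps : R) (N1 N2 H1 H2 : C) :
  0 <= lam -> lam <= 1 -> 0 <= eps -> 0 < N1 ->
  H1 + H2 < rc lam * (N1 + N2) -> 0 <= N2 + H2 -> N2 <= (real_complex R eps) * N1 ->
  complex.Re H1 < (lam + 2 * eps) * complex.Re N1.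
Proof.
case: N1 => a1 b1; case: N2 => a2 b2; case: H1 => c1 d1; case: H2 => c2 d2.
rewrite !ltcE !lecE /= => l0 l1 e0 /andP[_ hN1] /andP[_ h1] /andP[_ h2] /andP[_ h3].
rewrite mul0r subr0 in h1; rewrite mul0r subr0 in h3.
have p1 : 0 <= (1 + lam) * (eps * a1 - a2) by apply: mulr_ge0; lra.
have p2 : 0 <= (1 - lam) * (eps * a1) by apply: mulr_ge0; [lra | apply: mulr_ge0; lra].
nra.
Qed.
Variable V : finType.
Lemma sum_V (F : V -> R[i]) : \sum_(u : V) F u = \sum_(j < #|V|) F (enum_val j).
Proof.
rewrite -(big_enum_val (A := V)) /=.
by apply: eq_bigl => x; rewrite inE.
Qed.

Definition Wm (w : V -> V -> nat) : 'M[C]_#|V| :=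
  \matrix_(i, j) ((w (enum_val i) (enum_val j))%:R).

Lemma degWm w i : degv (Wm w) i = (deg w (enum_val i))%:R.
Proof.
rewrite /degv /deg natr_sum sum_V; apply: eq_bigr => j _; by rewrite mxE.
Qed.

Lemma rw_map w : map_mx rc (rw_mx R w) = Am (Wm w).
Proof.
apply/matrixP => i j; rewrite !mxE fmorph_div !rmorph_nat degWm //.
Qed.

Lemma Wm_union w1 w2 : Wm (gunion w1 w2) = Wm w1 + Wm w2.
Proof. by apply/matrixP => i j; rewrite !mxE natrD. Qed.

End F.

Section Lin.
Variable C : numClosedFieldType.
Variable n : nat.
Lemma degv_add (W1 W2 : 'M[C]_n) i : degv (W1 + W2) i = degv W1 i + degv W2 i.
Proof. by rewrite /degv -big_split; apply: eq_bigr => j _; rewrite mxE. Qed.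
Lemma Hf_add (W1 W2 : 'M[C]_n) f : Hf (W1 + W2) f = Hf W1 f + Hf W2 f.
Proof.
rewrite /Hf -big_split; apply: eq_bigr => i _; rewrite -big_split.
by apply: eq_bigr => j _; rewrite mxE !mulrDl.
Qed.
Lemma Nf_add (W1 W2 : 'M[C]_n) f : Nf (W1 + W2) f = Nf W1 f + Nf W2 f.
Proof.
rewrite /Nf -big_split; apply: eq_bigr => i _; by rewrite degv_add mulrDl.
Qed.
End Lin.

Lemma count_le1 (R : realType) (s : seq R) lam :
  sorted (fun x y => y <= x) s -> ((1 < size s)%N -> s`_1 < lam) ->
  (count (fun x => ~~ (x < lam)%R) s <= 1)%N.
Proof.
case: s => [|a [|b t]] //= hs h; first by rewrite addn0 leq_b1.
have hb : b < lam by apply: h.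
have tr : transitive (fun x y : R => y <= x).
  by move=> y x z hxy hyz; exact: le_trans hyz hxy.
have /allP ht := order_path_min tr (andP hs).2.
rewrite hb /= add0n.
have -> : count (fun x => ~~ (x < lam)) t = 0%N.
  apply/eqP; rewrite -leqn0 leqNgt -has_count; apply/hasPn => x /ht /= hx.
  by rewrite negbK (le_lt_trans hx hb).
by rewrite addn0 leq_b1.
Qed.


Lemma card_count (T : finType) (P : pred T) : #|[pred x | P x]| = count P (enum T).
Proof. by rewrite cardE enumT /enum_mem size_filter; apply: eq_count => x; rewrite !inE. Qed.
Lemma big_ord_enum (R : Type) (idx : R) (op : Monoid.com_law idx) n (F : 'I_n -> R) :
  \big[op/idx]_(k < n) F k = \big[op/idx]_(k <- enum 'I_n) F k.
Proof. by rewrite big_enum. Qed.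

Lemma count2 (R : realType) (l : seq R) c :
  sorted (fun x y => y <= x) l -> (1 < size l)%N -> c <= l`_1 ->
  (1 < count (fun x => c <= x)%R l)%N.
Proof.
case: l => [|a [|b t]] //= /andP[hab _] _ hb.
by rewrite hb (le_trans hb hab).
Qed.

Theorem lemma4p12 (R : realType) (V : finType) (w1 w2 : V -> V -> nat)
  (lam eps : R) :
  sym_graph w1 -> sym_graph w2 ->
  0 <= lam -> lam < 1 -> 0 <= eps -> eps < 1 ->
  gconnected (gunion w1 w2) ->
  second_eig_lt (rw_mx R (gunion w1 w2)) lam ->
  (forall v : V, (0 < deg w1 v)%N) ->
  (forall v : V, (deg w2 v)%:R / (deg w1 v)%:R <= eps) ->
  eps < (1 - lam) / 4 ->
  gconnected w1 /\ second_eig_lt (rw_mx R w1) (lam + 4 * eps).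
Proof.
move=> sy1 sy2 l0 l1 e0 e1 _ [s [[ssort schar] s1lt]] d1pos hdeg hel.

pose W1 := Wm R V w1; pose W2 := Wm R V w2; pose W := Wm R V (gunion w1 w2).
have WE : W = W1 + W2 by rewrite /W Wm_union.
have W1sym : forall i j, W1 i j = W1 j i by move=> i j; rewrite !mxE sy1.
have W2sym : forall i j, W2 i j = W2 j i by move=> i j; rewrite !mxE sy2.
have Wsym : forall i j, W i j = W j i by move=> i j; rewrite !mxE /gunion sy1 sy2.
have W1ge0 : forall i j, 0 <= W1 i j by move=> i j; rewrite mxE ler0n.
have W2ge0 : forall i j, 0 <= W2 i j by move=> i j; rewrite mxE ler0n.
have Wge0 : forall i j, 0 <= W i j by move=> i j; rewrite mxE ler0n.
have d1 : forall i, 0 < degv W1 i by move=> i; rewrite degWm ltr0n d1pos.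
have d2ge0 : forall i, 0 <= degv W2 i by move=> i; rewrite degWm ler0n.
have d : forall i, 0 < degv W i.
  by move=> i; rewrite WE degv_add -[0]addr0; exact: ltr_leD (d1 i) (d2ge0 i).
have d2 : forall i, degv W2 i <= (real_complex R eps) * degv W1 i.
  move=> i; rewrite !degWm -!(rmorph_nat (real_complex R)) -rmorphM lecR.
  by rewrite -ler_pdivrMr ?ltr0n // hdeg.
have lam1 : real_complex R lam < 1 by rewrite -(rmorph1 (real_complex R)) ltcR.
have Sh := Sm_herm Wsym Wge0 d.
have hc : (#|[pred k : 'I_#|V| | ~~ (spectral_diag (Sm W) 0 k < real_complex R lam)%R]| <= 1)%N.
  have hperm : perm_eq (map (real_complex R) s)
      [seq spectral_diag (Sm W) 0 k | k <- enum 'I_#|V|].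
    apply: prod_XsubC_eq.
    rewrite big_map -map_prod_XsubC -schar map_char_poly rw_map.
    by rewrite (char_Am d) (char_spec Sh) big_map big_ord_enum.
  rewrite card_count.
  have E := (permP hperm) (fun z => ~~ (z < real_complex R lam)%R).
  rewrite !count_map in E.
  have F : (count (preim (real_complex R) (fun z => ~~ (z < real_complex R lam)%R)) s <= 1)%N.
    rewrite (eq_count (a2 := fun x => ~~ (x < lam)%R)); first exact: count_le1.
    by move=> x /=; rewrite ltcR.
  apply: leq_trans F; rewrite E; apply/eq_leq; rewrite enumT; apply: eq_count => k //.
have ray := rayleigh Wsym Wge0 d lam1 hc.
have key : forall f : 'rV[R[i]]_#|V|, f != 0 -> \sum_i degv W i * f 0 i = 0 ->
    complex.Re (Hf W1 f) < (lam + 2 * eps) * complex.Re (Nf W1 f).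
  move=> f fn0 hs; apply: (@comb R lam eps (Nf W1 f) (Nf W2 f) (Hf W1 f) (Hf W2 f) l0 (ltW l1) e0 (N_gt0 d1 fn0)).
  - by rewrite -Hf_add -Nf_add -WE; exact: ray.
  - exact: NH_ge0 W2sym W2ge0 f.
  - rewrite /Nf mulr_sumr; apply: ler_sum => i _; rewrite [X in _ <= X]mulrA.
    by apply: ler_wpM2r; [exact: mul_conjC_ge0 | exact: d2].
have N1re : forall f : 'rV[R[i]]_#|V|, f != 0 -> 0 < complex.Re (Nf W1 f).
  by move=> f fn0; have := N_gt0 d1 fn0; rewrite ltcE => /andP[_].
split.
  move=> u v; apply: contraT => nc; exfalso.
  pose T := [set y | connect [rel x y | (0 < w1 x y)%N] u y].
  have clo : forall x y, (0 < w1 x y)%N -> (x \in T) = (y \in T).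
    move=> x y hxy; rewrite !inE; apply/idP/idP => h.
      by apply: connect_trans h (connect1 _); rewrite /= hxy.
    by apply: connect_trans h (connect1 _); rewrite /= sy1.
  pose t := fun i : 'I_#|V| => ((enum_val i \in T)%:R : R[i]).
  pose Dt := \sum_i degv W i; pose DT := \sum_i degv W i * t i.
  pose f : 'rV[R[i]]_#|V| := \row_i (Dt * t i - DT).
  have Dt0 : 0 < Dt.
    rewrite /Dt (bigD1 (enum_rank u)) //=.
    apply: ltr_pwDl; first exact: d.
    by apply: sumr_ge0 => i _; exact: ltW.
  have hu : t (enum_rank u) = 1 by rewrite /t enum_rankK inE connect0.
  have hv : t (enum_rank v) = 0 by rewrite /t enum_rankK inE (negbTE nc).
  have fn0 : f != 0.
    apply/eqP => h.
    have h1 : Dt * t (enum_rank u) - DT = 0.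
      by have := congr1 (fun g : 'rV[R[i]]_#|V| => g 0 (enum_rank u)) h; rewrite !mxE.
    have h2 : Dt * t (enum_rank v) - DT = 0.
      by have := congr1 (fun g : 'rV[R[i]]_#|V| => g 0 (enum_rank v)) h; rewrite !mxE.
    rewrite hu in h1; rewrite hv in h2.
    have : Dt = (Dt * 1 - DT) - (Dt * 0 - DT) by ring.
    by rewrite h1 h2 subrr => /eqP; rewrite gt_eqF.
  have hs : \sum_i degv W i * f 0 i = 0.
    rewrite (eq_bigr (fun i => Dt * (degv W i * t i) - degv W i * DT)); last first.
      by move=> i _; rewrite mxE; ring.
    by rewrite sumrB -mulr_sumr -mulr_suml /Dt /DT subrr.
  have HN : Hf W1 f = Nf W1 f.
    rewrite /Hf /Nf; apply: eq_bigr => i _; rewrite /degv mulr_suml.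
    apply: eq_bigr => j _.
    case: (posnP (w1 (enum_val i) (enum_val j))) => h.
      by rewrite /W1 mxE h !mul0r.
    have -> : f 0 j = f 0 i by rewrite !mxE /t (clo _ _ h).
    by rewrite mulrA.
  have := key f fn0 hs; rewrite HN => hk.
  have := N1re f fn0 => hp.
  nra.
pose ee := spectral_diag (Sm W1).
have Sh1 := Sm_herm W1sym W1ge0 d1.
have e1r : forall k, ee 0 k = real_complex R (complex.Re (ee 0 k)).
  by move=> k; rewrite RRe_real // (e_real Sh1).
pose s' := sort (fun x y : R => y <= x) [seq complex.Re (ee 0 k) | k <- enum 'I_#|V|].
have srt : sorted (fun x y : R => y <= x) s'.
  by apply: sort_sorted => x y; exact: le_total.
exists s'; split; first split => //.
  apply: (map_poly_inj (real_complex R)).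
  rewrite map_char_poly rw_map (char_Am d1) (char_spec Sh1) map_prod_XsubC.
  rewrite (perm_big _ (permEl (perm_sort _ _))) /= big_map big_ord_enum.
  by apply: eq_bigr => k _; rewrite -e1r.
move=> hsz; rewrite ltNge; apply/negP => hge.
have cnt := @count2 R s' _ srt hsz hge.
have /card_gt1P [k0 [k1 [hk0 hk1 k01]]] :
    (1 < #|[pred k : 'I_#|V| | (lam + 4 * eps <= complex.Re (ee 0 k))%R]|)%N.
  rewrite card_count; move: cnt.
  rewrite (permP (permEl (perm_sort _ _))) count_map enumT.
  by congr (_ < _)%N; apply: eq_count => k.
have c0 : real_complex R (lam + 4 * eps) <= ee 0 k0.
  by rewrite e1r lecR; move: hk0; rewrite inE.
have c1 : real_complex R (lam + 4 * eps) <= ee 0 k1.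
  by rewrite e1r lecR; move: hk1; rewrite inE.
have gr : forall i, degv W i \is Num.real by move=> i; exact/ger0_real/ltW/d.
have [f [fn0 hs hf]] := second W1sym W1ge0 d1 gr k01 c0 c1.
have := key f fn0 hs; have := N1re f fn0.
move: hf; case: (Nf W1 f) => a b; case: (Hf W1 f) => c' d'.
rewrite lecE /= => /andP[_ h] hp hk.
rewrite mul0r subr0 in h.
nra.
Qed.
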